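(* Let $\vec r\in\mathbb Z^n$. For every $\sigma\in H_{\vec r}$ and $\tau,\rho\in S_n$, $$\vartheta_{\vec r}(\sigma\tau,\rho)=\vartheta_{\vec r}(\sigma,\tau\rho)\,\vartheta_{\vec r}(\tau,\rho).$$
   Context: $n\ge2$, $\theta\in M_n(\mathbb R)$ skew-symmetric, $\omega_{ij}=e^{2\pi i\theta_{ij}}$. $S_n$ acts on $\mathbb Z^n$ by $\sigma\vec r=(r_{\sigma^{-1}(1)},\dots,r_{\sigma^{-1}(n)})$; $H_{\vec r}=\{\sigma\in S_n:\sigma\vec r=\vec r\}$. For $\sigma,\tau\in S_n$: $\vartheta_{\vec r}(\sigma,\tau)=\prod_{i<j,\ \sigma(i)>\sigma(j)}(\omega_{\tau^{-1}(j),\tau^{-1}(i)})^{r_{\sigma(i)}r_{\sigma(j)}}$. *)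

(* Defs.v *)
From HB Require Import structures.
From mathcomp Require Import all_boot all_order all_algebra all_fingroup.
From mathcomp Require Import reals trigo.
From mathcomp.real_closed Require Import complex.
Set Implicit Arguments. Unset Strict Implicit. Unset Printing Implicit Defensive.
Import Order.TTheory GRing.Theory Num.Theory.
Local Open Scope ring_scope.

(* Indices {1,..,n} are rendered as 'I_n = {0,..,n-1}; S_n = 'S_n = {perm 'I_n}. *)

(* omega_{ij} = e^{2 pi i theta_{ij}} = cos(2 pi theta_ij) + i sin(2 pi theta_ij) *)
Definition omega (R : realType) (n : nat) (theta : 'M[R]_n) (i j : 'I_n)
  : complex R :=
  (cos (2 * pi * theta i j) +i* sin (2 * pi * theta i j))%C.

(* Composition sigma tau of permutations as functions: (sigma tau)(x) = sigma (tau x).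
   Note: in MathComp, (s * t)%g x = t (s x), hence sigma o tau = (tau * sigma)%g. *)
Definition scomp (n : nat) (s t : 'S_n) : 'S_n := (t * s)%g.

Definition pact (n : nat) (s : 'S_n) (r : 'I_n -> int) : 'I_n -> int :=
  fun i => r ((s^-1)%g i).

Definition Hstab (n : nat) (r : 'I_n -> int) : {set 'S_n} :=
  [set s : 'S_n | [forall i, pact s r i == r i]].

Definition vartheta (R : realType) (n : nat) (theta : 'M[R]_n)
  (r : 'I_n -> int) (s t : 'S_n) : complex R :=
  \prod_(p : 'I_n * 'I_n | (p.1 < p.2)%N && (s p.2 < s p.1)%N)
     (omega theta ((t^-1)%g p.2) ((t^-1)%g p.1)) ^ (r (s p.1) * r (s p.2)).

(* Main.v *)
Require Import Defs.
From HB Require Import structures.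
From mathcomp Require Import all_boot all_order all_algebra all_fingroup.
From mathcomp Require Import reals trigo.
From mathcomp.real_closed Require Import complex.
Import GRing.Theory Num.Theory.
Local Open Scope ring_scope.

Lemma omega_swap (R : realType) (n : nat) (theta : 'M[R]_n)
  (htheta : theta^T = - theta) (a b : 'I_n) :
  omega theta a b * omega theta b a = 1.
Proof.
rewrite /omega; have -> : theta b a = - theta a b.
  by have := congr1 (fun M : 'M[R]_n => M a b) htheta; rewrite /= !mxE.
rewrite mulrN cosN sinN.
set c := cos _; set s := sin _.
have h : c ^+ 2 + s ^+ 2 = 1 by apply: cos2Dsin2.
apply/eqP; rewrite eq_complex /=; apply/andP; split; apply/eqP.
  by rewrite -h !expr2 mulrN opprK.
by rewrite mulrN mulrC addNr.
Qed.

Lemma omega_unit (R : realType) (n : nat) (theta : 'M[R]_n)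
  (htheta : theta^T = - theta) (a b : 'I_n) :
  omega theta a b \is a GRing.unit.
Proof.
by apply/unitrP; exists (omega theta b a); rewrite !omega_swap.
Qed.

Lemma omega_pow (R : realType) (n : nat) (theta : 'M[R]_n)
  (htheta : theta^T = - theta) (a b : 'I_n) (z : int) :
  omega theta a b ^ z * omega theta b a ^ z = 1.
Proof.
rewrite -exprMz_comm; first by rewrite omega_swap // exp1rz.
- exact: omega_unit.
- exact: omega_unit.
- exact: mulrC.
Qed.
Lemma prod_pairs (C : comRingType) n (F : 'I_n * 'I_n -> C) :
  \prod_p F p = \prod_(p : 'I_n * 'I_n | (p.1 < p.2)%N) (F p * F (p.2, p.1))
                * \prod_(p : 'I_n * 'I_n | p.1 == p.2) F p.
Proof.
rewrite (bigID (fun p : 'I_n * 'I_n => (p.1 < p.2)%N)) /=.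
rewrite [X in _ * X](bigID (fun p : 'I_n * 'I_n => p.1 == p.2)) /=.
rewrite big_split /=.
have -> : \prod_(i : 'I_n * 'I_n | ~~ (i.1 < i.2)%N && (i.1 == i.2)) F i
        = \prod_(p : 'I_n * 'I_n | p.1 == p.2) F p.
  apply: eq_bigl => -[i j] /=; case: eqP => [->|]; first by rewrite ltnn.
  by rewrite andbF.
have -> : \prod_(i : 'I_n * 'I_n | ~~ (i.1 < i.2)%N && (i.1 != i.2)) F i
        = \prod_(p : 'I_n * 'I_n | (p.1 < p.2)%N) F (p.2, p.1).
  rewrite (reindex_inj (inv_inj (f := fun p : 'I_n * 'I_n => (p.2, p.1)) _)) /=;
    last by case.
  apply: eq_bigl => -[i j] /=.
  case: (ltngtP i j) => h /=.
  - by apply/negP => /eqP E; move: h; rewrite E ltnn.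
  - by [].
  - by rewrite (val_inj h) eqxx.
by rewrite -mulrA [X in _ * X = _]mulrC.
Qed.

Theorem lemma4p10 (R : realType) (n : nat) (hn : (2 <= n)%N)
  (theta : 'M[R]_n) (htheta : theta^T = - theta)
  (r : 'I_n -> int) (sigma tau rho : 'S_n) (hsigma : sigma \in Hstab r) :
  vartheta theta r (scomp sigma tau) rho
  = vartheta theta r sigma (scomp tau rho) * vartheta theta r tau rho.
Proof.
have hr : forall x, r (sigma x) = r x.
  move=> x; move: hsigma; rewrite inE => /forallP /(_ (sigma x)) /eqP.
  by rewrite /pact permK.
pose u (p : 'I_n * 'I_n) := omega theta ((rho^-1)%g p.2) ((rho^-1)%g p.1).
pose w (p : 'I_n * 'I_n) := r (tau p.1) * r (tau p.2).
have E1 : vartheta theta r (scomp sigma tau) rho =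
  \prod_(p : 'I_n * 'I_n | (p.1 < p.2)%N && (sigma (tau p.2) < sigma (tau p.1))%N)
     u p ^ w p.
  by apply: eq_big => p; rewrite /scomp !permM ?hr.
have E2 : vartheta theta r sigma (scomp tau rho) =
  \prod_(p : 'I_n * 'I_n | (tau p.1 < tau p.2)%N && (sigma (tau p.2) < sigma (tau p.1))%N)
     u p ^ w p.
  have hinj : injective (fun p : 'I_n * 'I_n => (tau p.1, tau p.2)).
    by move=> [a b] [c d] /= [/perm_inj -> /perm_inj ->].
  rewrite /vartheta (reindex_inj hinj) /=.
  by apply: eq_bigr => p _; rewrite /scomp invMg !permM !permK !hr.
have E3 : vartheta theta r tau rho =
  \prod_(p : 'I_n * 'I_n | (p.1 < p.2)%N && (tau p.2 < tau p.1)%N) u p ^ w p.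
  by [].
rewrite E1 E2 E3 big_mkcond [X in _ = X * _]big_mkcond [X in _ = _ * X]big_mkcond /=.
rewrite !prod_pairs.
rewrite !(big1 _ (fun p : 'I_n * 'I_n => p.1 == p.2)); last first.
- by move=> [i j] /= /eqP ->; rewrite ltnn.
- by move=> [i j] /= /eqP ->; rewrite ltnn.
- by move=> [i j] /= /eqP ->; rewrite ltnn.
rewrite !mulr1 -big_split /=; apply: eq_bigr => -[i j] /= hij.
have hji : (j < i)%N = false by rewrite ltnNge ltnW.
have wsym : w (j, i) = w (i, j) by rewrite /w /= mulrC.
have uinv : u (j, i) ^ w (i, j) * u (i, j) ^ w (i, j) = 1.
  by rewrite /u /=; apply: omega_pow.
rewrite hij hji wsym /=.
have nij : i != j by rewrite neq_ltn hij.
case: (ltngtP (tau i) (tau j)) => ht /=.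
- by rewrite !mulr1.
- rewrite !mulr1; case: (ltngtP (sigma (tau i)) (sigma (tau j))) => hs /=.
  + by rewrite mul1r uinv.
  + by rewrite ?mul1r ?mulr1.
  + by move/val_inj/perm_inj/perm_inj: hs => E; rewrite E eqxx in nij.
- by move/val_inj/perm_inj: ht => E; rewrite E eqxx in nij.
Qed.
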